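(* Let $\mathbb N_\bot$ be the poset with carrier $\mathbb N+\mathbf 1$ ordered by: $\mathrm{inr}(\star)\sqsubseteq y$ for all $y$, $\mathrm{inl}(n)\sqsubseteq\mathrm{inl}(m)$ iff $n=m$, and $\mathrm{inl}(n)\not\sqsubseteq\mathrm{inr}(\star)$. If $\mathbb N_\bot$ is $\omega$-complete (every chain $x_0\sqsubseteq x_1\sqsubseteq\cdots$ indexed by $\mathbb N$ has a supremum), then LPO holds: for every $\alpha:\mathbb N\to\mathbf 2$, the proposition $\exists_{n:\mathbb N}\,\alpha_n=1$ is decidable. In particular, if $\mathbb N_\bot$ is $\mathcal U_0$-directed complete, then LPO holds.
   Context: Setting: intensional Martin-Löf type theory with universes $\mathcal U_0,\mathcal U_1,\dots$ ($\mathbb N:\mathcal U_0$), function extensionality, propositional extensionality and propositional truncations ($\exists :\equiv \|\Sigma\|$); no excluded middle or choice. A proposition $P$ is decidable if $P+\neg P$. $\mathcal U_0$-directed complete means every directed family $\alpha : I\to \mathbb N_\bot$ with $I:\mathcal U_0$ (directed: $\|I\|$ and for all $i,j$ there truncated-exists $k$ with $\alpha_i,\alpha_j\sqsubseteq\alpha_k$) has a least upper bound. *)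

(* Defs.v *)
Definition Nbot : Type := (nat + unit)%type.

Definition Nbot_le (x y : Nbot) : Prop :=
  match x, y with
  | inr _, _ => True
  | inl n, inl m => n = m
  | inl _, inr _ => False
  end.

Definition is_sup {I : Type} (a : I -> Nbot) (s : Nbot) : Prop :=
  (forall i, Nbot_le (a i) s) /\
  (forall u, (forall i, Nbot_le (a i) u) -> Nbot_le s u).

Definition omega_complete : Prop :=
  forall a : nat -> Nbot,
    (forall n, Nbot_le (a n) (a (S n))) -> exists s, is_sup a s.

(** Directed family (propositional truncations rendered as Prop). *)
Definition directed {I : Type} (a : I -> Nbot) : Prop :=
  inhabited I /\
  forall i j, exists k, Nbot_le (a i) (a k) /\ Nbot_le (a j) (a k).

(** U0-directed completeness: index types in the lowest universe Set
    (which contains nat). *)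
Definition U0_directed_complete : Prop :=
  forall (I : Set) (a : I -> Nbot), directed a -> exists s, is_sup a s.

(** Decidability of a proposition (for a proposition P, P + ~P is itself
    a proposition, rendered here as P \/ ~P). *)
Definition decidable_prop (P : Prop) : Prop := P \/ ~ P.

Definition LPO : Prop :=
  forall alpha : nat -> bool, decidable_prop (exists n, alpha n = true).

(* Main.v *)
Require Import Defs.
From Stdlib Require Import Arith Lia.

Section Aux.
Variable alpha : nat -> bool.

Fixpoint fa (n : nat) : option nat :=
  match n with
  | 0 => if alpha 0 then Some 0 else None
  | S n' => match fa n' with
            | Some k => Some k
            | None => if alpha (S n') then Some (S n') else None
            end
  end.

Definition ch (n : nat) : Nbot :=
  match fa n with Some k => inl k | None => inr tt end.

Lemma fa_true n k : fa n = Some k -> alpha k = true.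
Proof.
  induction n as [|n IH]; simpl.
  - destruct (alpha 0) eqn:E; intro H; inversion H; subst; auto.
  - destruct (fa n) eqn:F.
    + intro H; inversion H; subst; auto.
    + destruct (alpha (S n)) eqn:E; intro H; inversion H; subst; auto.
Qed.

Lemma ch_step n : Nbot_le (ch n) (ch (S n)).
Proof.
  unfold ch; simpl. destruct (fa n); simpl; auto.
Qed.

Lemma ch_mono i j : i <= j -> Nbot_le (ch i) (ch j).
Proof.
  induction 1. - destruct (ch i); simpl; auto.
  - pose proof (ch_step m). destruct (ch i), (ch m), (ch (S m)); simpl in *; try exact I; try contradiction; congruence.
Qed.

Lemma fa_some k : alpha k = true -> exists j, fa k = Some j.
Proof.
  destruct k; simpl; intro H.
  - rewrite H; eauto.
  - destruct (fa k); eauto. rewrite H; eauto.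
Qed.

Lemma lpo_of_sup s : is_sup ch s -> decidable_prop (exists n, alpha n = true).
Proof.
  intros [Hub Hl]. destruct s as [m|u].
  - destruct (alpha m) eqn:E.
    + left; eauto.
    + right. intros [k Hk]. destruct (fa_some k Hk) as [j Hj].
      specialize (Hub k). unfold ch in Hub. rewrite Hj in Hub. simpl in Hub.
      subst. apply fa_true in Hj. congruence.
  - right. intros [k Hk]. destruct (fa_some k Hk) as [j Hj].
    specialize (Hub k). unfold ch in Hub. rewrite Hj in Hub. simpl in Hub. exact Hub.
Qed.
End Aux.

Lemma omega_LPO : omega_complete -> LPO.
Proof.
  intros H alpha. destruct (H (ch alpha) (ch_step alpha)) as [s Hs].
  exact (lpo_of_sup alpha s Hs).
Qed.

Theorem proposition5p1 :
  (omega_complete -> LPO) /\ (U0_directed_complete -> LPO).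
Proof.
  split. - exact omega_LPO.
  - intros H. apply omega_LPO. intros a Ha.
    assert (M : forall i j, i <= j -> Nbot_le (a i) (a j)).
    { induction 1. - destruct (a i); simpl; auto.
      - pose proof (Ha m). destruct (a i), (a m), (a (S m)); simpl in *; try exact I; try contradiction; congruence. }
    apply (H nat a). split. + exact (inhabits 0).
    + intros i j. exists (max i j). split; apply M; lia.
Qed.
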